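(* If $\tau$ is measurable and boundedly oscillating, then there exist $g\in C^\infty(\mathbb{R})$ vanishing on $(-\infty,0]$ with $g^{(n)}\in L^\infty(\mathbb{R})$ for all $n\in\mathbb{N}$, and $x_0$ such that $\tau(x)=\int_0^x g(y)\,\mathrm{d}y+O(1)$ for $x\in[x_0,\infty)$.
   Context: A function $\tau$ is boundedly oscillating if there is $\delta>0$ with $\limsup_{x\to\infty}\sup_{h\in[0,\delta]}|\tau(x+h)-\tau(x)|<\infty$. *)

(* Defs.v *)
From HB Require Import structures.
From mathcomp Require Import all_boot all_order all_algebra.
From mathcomp Require Import all_classical all_reals all_analysis.
Set Implicit Arguments. Unset Strict Implicit. Unset Printing Implicit Defensive.
Import Order.TTheory GRing.Theory Num.Theory.
Import numFieldNormedType.Exports.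
Local Open Scope classical_set_scope.
Local Open Scope ring_scope.

Definition lebesgue_measurable_set {R : realType} (A : set R) : Prop :=
  exists B : set (measurableTypeR R), measurable B /\
    (@lebesgue_measure R).-negligible ((A `\` B) `|` (B `\` A)).

Definition lebesgue_measurable_fun {R : realType} (f : R -> R) : Prop :=
  forall B : set (measurableTypeR R), measurable B ->
    lebesgue_measurable_set (f @^-1` B).

Definition boundedly_oscillating {R : realType} (tau : R -> R) : Prop :=
  exists2 delta : R, 0 < delta &
    (limf_esup
       (fun x : R => ereal_sup [set (`|tau (x + h) - tau x|)%:E | h in (`[0%R, delta]%classic : set R)])
       (pinfty_nbhs R) < +oo)%E.

(* Main.v *)
Require Import Defs.
From HB Require Import structures.
From mathcomp Require Import all_boot all_order all_algebra.
From mathcomp Require Import all_classical all_reals all_analysis.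
From mathcomp Require Import ring lra.
Import Order.TTheory GRing.Theory Num.Theory.
Import numFieldNormedType.Exports.
Local Open Scope classical_set_scope.
Local Open Scope ring_scope.

Lemma bo_bound (R : realType) (tau : R -> R) : boundedly_oscillating tau ->
  exists delta X M : R, [/\ 0 < delta, 0 <= M &
    forall x h, X <= x -> 0 <= h <= delta -> `|tau (x + h) - tau x| <= M].
Proof.
case=> d d0 /ereal_inf_lt[_ [V [M [Mr MV]] <-]] hV.
have [B HB] : exists B : R, (ereal_sup [set (fun x : R => ereal_sup [set (`|tau (x + h) - tau x|)%:E | h in (`[0%R, d]%classic : set R)]) x | x in V] <= B%:E)%E.
  move: hV; case: (ereal_sup _) => [r| |] hV.
  - by exists r.
  - by rewrite ltxx in hV.
  - by exists 0; rewrite leNye.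
exists d, (M + 1), (Num.max B 0); split => //; first by rewrite le_max lexx orbT.
move=> x h xM /andP[h0 hd].
have Vx : V x by apply: MV; rewrite (lt_le_trans _ xM)// ltrDl.
rewrite le_max; apply/orP; left; rewrite -lee_fin; apply: le_trans HB.
apply: le_trans; last by apply: ereal_sup_ubound; exists x.
by apply: ereal_sup_ubound; exists h => //=; rewrite in_itv/= h0 hd.
Qed.

Lemma bo_bound1 (R : realType) (tau : R -> R) : boundedly_oscillating tau ->
  exists X B : R, 0 <= B /\
    forall x h, X <= x -> 0 <= h <= 1 -> `|tau (x + h) - tau x| <= B.
Proof.
move=> /bo_bound [d [X [M [d0 M0 HM]]]].
have key : forall m : nat, forall x h, X <= x -> 0 <= h <= m%:R * d ->
    `|tau (x + h) - tau x| <= m%:R * M.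
  elim=> [|m IH] x h Xx /andP[h0 hm].
    have -> : h = 0 by apply/le_anti; rewrite h0 andbT; rewrite mul0r in hm.
    by rewrite addr0 subrr normr0 mul0r.
  have [hd|dh] := leP h d.
    have H := HM x h Xx; rewrite h0 hd in H; apply: (le_trans (H isT)).
    by rewrite -[X in X <= _]mul1r ler_wpM2r // ler1n.
  have -> : tau (x + h) - tau x = (tau (x + (h - d) + d) - tau (x + (h - d)))
       + (tau (x + (h - d)) - tau x).
    by rewrite addrA subrK -addrA subrK.
  apply: le_trans (ler_normD _ _) _.
  rewrite -natr1 mulrDl mul1r addrC; apply: lerD.
    apply: IH => //; rewrite subr_ge0 (ltW dh) /= lerBlDr.
    by rewrite -[X in _ <= _ + X]mul1r -mulrDl natr1.
  apply: HM; last by rewrite (ltW d0) lexx.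
  by rewrite (le_trans Xx) // lerDl subr_ge0 ltW.
exists X, ((Num.truncn d^-1).+1%:R * M); split; first exact: mulr_ge0.
move=> x h Xx /andP[h0 h1]; apply: key => //; rewrite h0 /=.
apply: (le_trans h1).
rewrite -ler_pdivrMr // div1r; apply: ltW; exact: truncnS_gt.
Qed.
Section Smooth.
Variable R : realType.
Implicit Types (u v h : R -> R).

Definition Dk (n : nat) (h : R -> R) :=
  forall k x, (k <= n)%N -> derivable (derive1n k h) x 1.

Lemma DkS n h : Dk n.+1 h <-> (forall x, derivable h x 1) /\ Dk n (derive1 h).
Proof.
split.
  move=> H; split; first by move=> x; exact: (H 0%N).
  by move=> k x kn; rewrite -derive1Sn; apply: H.
move=> [H1 H2] [|k] x kn; first exact: H1.
by rewrite derive1Sn; apply: H2.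
Qed.

Lemma Dk_le m n h : (m <= n)%N -> Dk n h -> Dk m h.
Proof. by move=> mn H k x km; apply: H; exact: leq_trans km mn. Qed.

Lemma Dk0 h : Dk 0 h <-> forall x, derivable h x 1.
Proof.
split; first by move=> H x; exact: (H 0%N).
by move=> H [|k] x // _.
Qed.

Lemma derive1_add u v : (forall x, derivable u x 1) -> (forall x, derivable v x 1) ->
  derive1 (fun x => u x + v x) = fun x => derive1 u x + derive1 v x.
Proof.
move=> du dv; apply/funext => x.
by rewrite derive1E (deriveD (du x) (dv x)) -!derive1E.
Qed.

Lemma derivable_add u v x : derivable u x 1 -> derivable v x 1 ->
  derivable (fun x => u x + v x) x 1.
Proof. exact: derivableD. Qed.


Lemma derive1_scale c u : (forall x, derivable u x 1) ->
  derive1 (fun x => c * u x) = fun x => c * derive1 u x.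
Proof. by move=> du; apply/funext => x; rewrite derive1Ml. Qed.

Lemma derive1_mul u v : (forall x, derivable u x 1) -> (forall x, derivable v x 1) ->
  derive1 (fun x => u x * v x) = fun x => derive1 u x * v x + u x * derive1 v x.
Proof.
move=> du dv; apply/funext => x.
rewrite derive1E (deriveM (du x) (dv x)) -!derive1E.
by rewrite addrC /GRing.scale /= mulrC [u x * _]mulrC.
Qed.

Lemma derive1_inv h : (forall x, h x != 0) -> (forall x, derivable h x 1) ->
  derive1 (fun x => (h x)^-1) = fun x => (-1) * (derive1 h x * ((h x)^-1 * (h x)^-1)).
Proof.
move=> h0 dh; apply/funext => x.
rewrite derive1E (deriveV (h0 x) (dh x)) -!derive1E.
by rewrite /GRing.scale /= mulN1r mulNr mulrC -invrM ?unitfE // -expr2.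
Qed.

Lemma derivable_aff a b x : derivable (fun x : R => a * x + b) x 1.
Proof. by apply: derivableD; [apply: derivableM; [exact: derivable_cst|exact: derivable_id]|exact: derivable_cst]. Qed.

Lemma derive1_aff_comp h a b : (forall x, derivable h x 1) ->
  derive1 (fun x => h (a * x + b)) = fun x => a * derive1 h (a * x + b).
Proof.
move=> dh; apply/funext => x.
have := @derive1_comp R (fun x => a * x + b) h x (derivable_aff a b x) (dh _).
rewrite /comp => ->; rewrite mulrC; congr (_ * _).
rewrite derive1E deriveD; [|by apply: derivableM; [exact: derivable_cst|exact: derivable_id]|exact: derivable_cst].
rewrite deriveM; [|exact: derivable_cst|exact: derivable_id].
by rewrite derive_id !derive_cst /GRing.scale /= !(mulr0, addr0, mulr1).
Qed.

Lemma DkD n u v : Dk n u -> Dk n v -> Dk n (fun x => u x + v x).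
Proof.
elim: n u v => [|n IH] u v.
  by rewrite !Dk0 => du dv x; apply: derivable_add.
move=> /DkS[du Du] /DkS[dv Dv]; apply/DkS; split.
  by move=> x; apply: derivable_add.
by rewrite derive1_add //; apply: IH.
Qed.

Lemma DkZ n c u : Dk n u -> Dk n (fun x => c * u x).
Proof.
elim: n u => [|n IH] u.
  rewrite !Dk0 => du x; apply: derivableM => //; exact: derivable_cst.
move=> /DkS[du Du]; apply/DkS; split.
  by move=> x; apply: derivableM => //; exact: derivable_cst.
by rewrite derive1_scale //; apply: IH.
Qed.

Lemma DkM n u v : Dk n u -> Dk n v -> Dk n (fun x => u x * v x).
Proof.
elim: n u v => [|n IH] u v.
  by rewrite !Dk0 => du dv x; apply: derivableM.
move=> Hu Hv; have Hu' := @Dk_le n n.+1 _ (leqnSn n) Hu; have Hv' := @Dk_le n n.+1 _ (leqnSn n) Hv.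
move: Hu Hv => /DkS[du Du] /DkS[dv Dv]; apply/DkS; split.
  by move=> x; apply: derivableM.
rewrite derive1_mul //; apply: DkD; exact: IH.
Qed.

Lemma DkV n h : (forall x, h x != 0) -> Dk n h -> Dk n (fun x => (h x)^-1).
Proof.
move=> h0; elim: n h h0 => [|n IH] h h0.
  by rewrite !Dk0 => dh x; apply: derivableV.
move=> Hh; have Hh' := @Dk_le n n.+1 _ (leqnSn n) Hh.
move: Hh => /DkS[dh Dh]; apply/DkS; split.
  by move=> x; apply: derivableV.
rewrite derive1_inv //; apply: DkZ; apply: DkM => //; apply: DkM; exact: IH.
Qed.

Lemma Dk_aff n h a b : Dk n h -> Dk n (fun x => h (a * x + b)).
Proof.
elim: n h => [|n IH] h.
  rewrite !Dk0 => dh x.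
  apply/derivable1_diffP; apply: differentiable_comp.
    by apply/derivable1_diffP; exact: derivable_aff.
  by apply/derivable1_diffP; exact: dh.
move=> Hh; have Hh' := @Dk_le n n.+1 _ (leqnSn n) Hh.
move: Hh => /DkS[dh Dh]; apply/DkS; split.
  by move=> x; exact: (IH h Hh' 0%N x (leq0n n)).
by rewrite derive1_aff_comp //; apply: DkZ; apply: IH.
Qed.

Lemma Dk_cst n c : Dk n (fun _ => c).
Proof.
elim: n c => [|n IH] c; first by apply/Dk0 => x; exact: derivable_cst.
apply/DkS; split; first by move=> x; exact: derivable_cst.
have -> : derive1 (fun _ : R => c) = fun _ => 0.
  by apply/funext => x; exact: derive1_cst.
exact: IH.
Qed.

End Smooth.
Section Phi.
Variable R : realType.

Definition phi (p : {poly R}) (t : R) : R :=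
  if 0 < t then p.[t^-1] * expR (- t^-1) else 0.
Definition dpoly (p : {poly R}) : {poly R} := 'X^2 * (p - p^`()).

Lemma poly_bound (p : {poly R}) (u : R) : 1 <= u ->
  `|p.[u]| <= (\sum_(i < size p) `|p`_i|) * u ^+ (size p).
Proof.
move=> u1; rewrite horner_coef mulr_suml.
apply: le_trans (ler_norm_sum _ _ _) _; apply: ler_sum => i _.
rewrite normrM normrX (ger0_norm (le_trans ler01 u1)).
apply: ler_wpM2l; first exact: normr_ge0.
by apply: ler_weXn2l => //; apply: ltnW.
Qed.

Lemma exp_bound (k : nat) (u : R) : 0 <= u -> u ^+ k.+1 * expR (- u) <= k.+1`!%:R.
Proof.
move=> u0; have := expR_ge1Dxn k u0.
rewrite -lerBrDl => H.
have H2 : u ^+ k.+1 <= k.+1`!%:R * expR u.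
  rewrite -ler_pdivrMl ?ltr0n ?fact_gt0 // mulrC.
  apply: le_trans H _; rewrite lerBlDr lerDl; exact: ler01.
rewrite expRN -ler_pdivlMr ?invr_gt0 ?expR_gt0 // invrK.
exact: H2.
Qed.

Lemma phi_est (p : {poly R}) (u : R) : 1 <= u ->
  `|u * (p.[u] * expR (- u))| <=
    (\sum_(i < size p) `|p`_i|) * (size p).+2`!%:R * u^-1.
Proof.
move=> u1; have u0 : 0 < u by apply: lt_le_trans u1; exact: ltr01.
set A := \sum_(i < size p) `|p`_i|; set d := size p.
have A0 : 0 <= A by apply: sumr_ge0 => i _; exact: normr_ge0.
rewrite normrM normrM (ger0_norm (ltW u0)) (ger0_norm (expR_ge0 _)).
apply: (@le_trans _ _ (u * (A * u ^+ d) * expR (- u))).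
  rewrite mulrA; apply: ler_wpM2r; first exact: expR_ge0.
  by apply: ler_wpM2l; [exact: ltW|exact: poly_bound].
have -> : u * (A * u ^+ d) * expR (- u) = A * (u ^+ d.+2 * expR (- u)) * u^-1.
  rewrite !exprS; field; exact: lt0r_neq0.
apply: ler_wpM2r; first by rewrite invr_ge0 ltW.
apply: ler_wpM2l => //.
exact: (exp_bound d.+1 u (ltW u0)).
Qed.


Lemma derivable_inv (t : R) : t != 0 -> derivable (fun s : R => s^-1) t 1.
Proof. by move=> t0; exact: (@derivableV R R^o (@id R) t 1 t0 (@derivable_id R R t 1)). Qed.

Lemma derive1_inv_pt (t : R) : t != 0 -> derive1 (fun s : R => s^-1) t = - t ^- 2.
Proof.
move=> t0; rewrite derive1E (@deriveV R R^o (@id R) t 1 t0 (@derivable_id R R t 1)).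
by rewrite derive_id /GRing.scale /= mulr1.
Qed.

Lemma phi_is_derive_pos (p : {poly R}) (t : R) : 0 < t ->
  is_derive t 1 (phi p) (phi (dpoly p) t).
Proof.
move=> t0; have tn0 : t != 0 by rewrite gt_eqF.
pose f := horner p \o (fun s : R => s^-1).
pose g := expR \o (fun s : R => - s^-1).
have df : derivable f t 1.
  apply/derivable1_diffP; apply: differentiable_comp.
    by apply/derivable1_diffP; exact: derivable_inv.
  by apply/derivable1_diffP; exact: derivable_horner.
have dg : derivable g t 1.
  apply/derivable1_diffP; apply: differentiable_comp.
    by apply/derivable1_diffP; apply: derivableN; exact: derivable_inv.
  by apply/derivable1_diffP; exact: derivable_expR.
apply: (@near_eq_is_derive _ _ _ (f * g)).
  near=> s; rewrite /phi ifT //; near: s; exact: lt_nbhsr.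
apply: DeriveDef; first exact: derivableM.
rewrite deriveM // -(derive1E g) -(derive1E f).
rewrite (derive1_comp (f := fun s : R => s^-1)); last 2 first.
- exact: derivable_inv.
- exact: derivable_horner.
rewrite (derive1_comp (f := fun s : R => - s^-1)); last 2 first.
- by apply: derivableN; exact: derivable_inv.
- exact: derivable_expR.
rewrite -derivE (derive1_inv_pt _ tn0).
have -> : expR^`()%classic (- t^-1) = expR (- t^-1) :> R.
  by rewrite derive1E; exact: derive_val.
rewrite derive1E deriveN; last exact: derivable_inv.
rewrite -derive1E (derive1_inv_pt _ tn0).
rewrite /phi t0 /dpoly /f /g /comp !hornerE /GRing.scale /= exprVn.
ring.
Unshelve. all: by end_near. Qed.




Lemma phi_is_derive_neg (p : {poly R}) (t : R) : t < 0 ->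
  is_derive t 1 (phi p) (phi (dpoly p) t).
Proof.
move=> t0; have -> : phi (dpoly p) t = 0 by rewrite /phi ltNge (ltW t0).
apply: (@near_eq_is_derive _ _ _ (cst 0)).
near=> s; rewrite /phi ifN //= -leNgt ltW //; near: s; exact: lt_nbhsl.
Unshelve. all: by end_near. Qed.

Lemma phi_is_derive0 (p : {poly R}) : is_derive (0:R) (1:R) (phi p) (phi (dpoly p) 0).
Proof.
rewrite {2}/phi ltxx.
set C := (\sum_(i < size p) `|p`_i|) * (size p).+2`!%:R.
have C0 : 0 <= C.
  by apply: mulr_ge0 => //; apply: sumr_ge0 => i _; exact: normr_ge0.
have lim0 : (fun h : R => h^-1 *: ((phi p \o shift 0) (h *: 1) - phi p 0)) @ 0^' --> (0:R).
  apply/cvgr0Pnorm_lt => e e0.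
  have e1 : 0 < Num.min 1 (e / (C + 1)).
    by rewrite lt_min ltr01 /= divr_gt0 // ltr_wpDl.
  near=> h.
  have hn : `|h| < Num.min 1 (e / (C + 1)) by near: h; exact: dnbhs0_lt.
  move: hn; rewrite lt_min => /andP[h1 he].
  rewrite /comp /shift /= {2}/phi ltxx subr0 addr0 /GRing.scale /= mulr1.
  rewrite /phi; case: ifPn => hp; last by rewrite mulr0 normr0.
  rewrite (gtr0_norm hp) in h1 he.
  have := phi_est p h^-1.
  rewrite invrK => H; apply: le_lt_trans (H _) _.
    by rewrite invr_ge1 ?ltW // unitfE gt_eqF.
  apply: (@le_lt_trans _ _ ((C + 1) * h)).
    by apply: ler_wpM2r; [exact: ltW|rewrite lerDl].
  by rewrite mulrC -ltr_pdivlMr // ltr_wpDl.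
apply: DeriveDef; [exact: cvgP lim0 | exact: cvg_lim lim0].
Unshelve. all: by end_near. Qed.

End Phi.

Arguments phi {R}. Arguments dpoly {R}. Arguments Dk {R}.

Section Step.
Variable R : realType.

Lemma phi_is_derive (p : {poly R}) (t : R) : is_derive t 1 (phi p) (phi (dpoly p) t).
Proof.
case: (ltgtP t 0) => [t0|t0|->].
- exact: phi_is_derive_neg.
- exact: phi_is_derive_pos.
- exact: phi_is_derive0.
Qed.

Lemma derive1_phi (p : {poly R}) : derive1 (phi p) = phi (dpoly p).
Proof.
by apply/funext => t; rewrite derive1E; case: (phi_is_derive p t).
Qed.

Lemma Dk_phi n (p : {poly R}) : Dk n (phi p).
Proof.
elim: n p => [|n IH] p.
  by apply/Dk0 => x; case: (phi_is_derive p x).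
apply/DkS; split; first by move=> x; case: (phi_is_derive p x).
by rewrite derive1_phi.
Qed.

Definition ff (t : R) : R := phi 1 t.

Lemma ff_pos t : 0 < t -> 0 < ff t.
Proof. by move=> t0; rewrite /ff /phi t0 hornerC mul1r expR_gt0. Qed.

Lemma ff_ge0 t : 0 <= ff t.
Proof. by rewrite /ff /phi; case: ifP => _; [rewrite hornerC mul1r expR_ge0|]. Qed.

Lemma ff_le0 t : t <= 0 -> ff t = 0.
Proof. by move=> t0; rewrite /ff /phi ltNge t0. Qed.

Definition den (t : R) : R := ff t + ff ((-1) * t + 1).

Lemma den_pos t : 0 < den t.
Proof.
rewrite /den; have [t0|t0] := leP t 0; last first.
  by apply: (lt_le_trans (ff_pos _ t0)); rewrite lerDl; exact: ff_ge0.
have h1 : 0 < (-1) * t + 1 by rewrite mulN1r addrC subr_gt0 (le_lt_trans t0) ?ltr01.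
by apply: (lt_le_trans (ff_pos _ h1)); rewrite lerDr; exact: ff_ge0.
Qed.

Definition Sf (t : R) : R := ff t * (den t)^-1.

Lemma Dk_Sf n : Dk n Sf.
Proof.
apply: DkM; first exact: Dk_phi.
apply: DkV; first by move=> x; rewrite gt_eqF // den_pos.
apply: DkD; first exact: Dk_phi.
apply: (@Dk_aff R n ff); exact: Dk_phi.
Qed.

Lemma Sf_le0 t : t <= 0 -> Sf t = 0.
Proof. by move=> t0; rewrite /Sf ff_le0 // mul0r. Qed.

Lemma Sf_ge1 t : 1 <= t -> Sf t = 1.
Proof.
move=> t1; rewrite /Sf /den (ff_le0 ((-1) * t + 1)); last first.
  by rewrite mulN1r addrC subr_le0.
rewrite addr0 divff // gt_eqF //; apply: ff_pos; exact: (lt_le_trans ltr01 t1).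
Qed.

Lemma Sf_01 t : 0 <= Sf t <= 1.
Proof.
rewrite /Sf; apply/andP; split.
  by apply: mulr_ge0; [exact: ff_ge0|rewrite invr_ge0 ltW // den_pos].
rewrite ler_pdivrMr ?den_pos // mul1r /den lerDl; exact: ff_ge0.
Qed.


Lemma open_near (U : set R) (x : R) : open U -> U x -> \forall y \near x, U y.
Proof. by move=> oU Ux; apply: open_nbhs_nbhs; split. Qed.

Lemma derive1n_loc n (f g : R -> R) (U : set R) : open U ->
  (forall x, U x -> f x = g x) -> forall x, U x -> derive1n n f x = derive1n n g x.
Proof.
move=> oU fg; elim: n => [|n IH] x Ux; first exact: fg.
rewrite !derive1nS !derive1E; apply: near_eq_derive.
near=> y; apply: IH; near: y; exact: open_near.
Unshelve. all: by end_near. Qed.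

Lemma derivable_loc n (f g : R -> R) (U : set R) : open U ->
  (forall x, U x -> f x = g x) -> forall x, U x ->
  derivable (derive1n n g) x 1 -> derivable (derive1n n f) x 1.
Proof.
move=> oU fg x Ux; apply: near_eq_derivable.
near=> y; apply/esym; apply: (@derive1n_loc n f g U oU fg); near: y; exact: open_near.
Unshelve. all: by end_near. Qed.

Lemma derive1n_cst n (c : R) : derive1n n.+1 (fun _ : R => c) = fun _ => 0.
Proof.
elim: n => [|n IH].
  by rewrite derive1n1; apply/funext => x; exact: derive1_cst.
by rewrite derive1nS IH; apply/funext => x; exact: derive1_cst.
Qed.

Lemma derive1n_cst_le n (c t : R) : `|derive1n n (fun _ : R => c) t| <= `|c|.
Proof. by case: n => [|n] //; rewrite derive1n_cst normr0 normr_ge0. Qed.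

Lemma Sf_bound k : exists M : R, forall t, `|derive1n k Sf t| <= M.
Proof.
have cont : continuous (derive1n k Sf).
  move=> x; apply: differentiable_continuous; apply/derivable1_diffP.
  exact: (Dk_Sf k k x (leqnn k)).
have [c c01 Hc] := @EVT_max R (fun t => `|derive1n k Sf t|) 0 1 ler01
  (continuous_subspaceT (fun x => continuous_comp (cont x) (@norm_continuous _ _ _))).
exists (Num.max 1 `|derive1n k Sf c|) => t.
have [t0|t0] := ltP t 0.
  have e0 : derive1n k Sf t = derive1n k (fun _ : R => 0 : R) t.
    apply: (@derive1n_loc k Sf (fun _ : R => 0 : R) [set x | x < 0]) => //.
    by move=> x /= x0; apply: Sf_le0; exact: ltW.
  by rewrite e0; apply: le_trans (derive1n_cst_le _ _ _) _; rewrite normr0 le_max ler01.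
have [t1|t1] := leP t 1.
  by rewrite le_max; apply/orP; right; apply: Hc; rewrite in_itv /= t0 t1.
have e1 : derive1n k Sf t = derive1n k (fun _ : R => 1 : R) t.
  apply: (@derive1n_loc k Sf (fun _ : R => 1 : R) [set x | x > 1]) => //.
  by move=> x /= x1; apply: Sf_ge1; exact: ltW.
by rewrite e1; apply: le_trans (derive1n_cst_le _ _ _) _; rewrite normr1 le_max lexx.
Qed.


Lemma derive1n_add n (u v : R -> R) : Dk n u -> Dk n v ->
  derive1n n (fun x => u x + v x) = fun x => derive1n n u x + derive1n n v x.
Proof.
elim: n u v => [|n IH] u v; first by [].
move=> /DkS[du Du] /DkS[dv Dv].
rewrite !derive1Sn derive1_add //.
exact: (IH _ _ Du Dv).
Qed.

Lemma derive1n_scale n (c : R) (u : R -> R) : Dk n u ->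
  derive1n n (fun x => c * u x) = fun x => c * derive1n n u x.
Proof.
elim: n u => [|n IH] u; first by [].
move=> /DkS[du Du].
rewrite !derive1Sn derive1_scale //; exact: (IH _ Du).
Qed.

Lemma derive1_shift (h : R -> R) (b : R) :
  derive1 (fun x => h (x + b)) = fun x => derive1 h (x + b).
Proof.
apply/funext => x; rewrite /derive1.
have -> : (fun t : R => t^-1 *: (h (t + x + b) - h (x + b))) =
          (fun t : R => t^-1 *: (h (t + (x + b)) - h (x + b))).
  by apply/funext => t; rewrite addrA.
by [].
Qed.

Lemma derive1n_shift n (h : R -> R) (b : R) :
  derive1n n (fun x => h (x + b)) = fun x => derive1n n h (x + b).
Proof.
elim: n h => [|n IH] h; first by [].
by rewrite !derive1Sn derive1_shift IH.
Qed.

Lemma Dk_shift n (h : R -> R) (b : R) : Dk n h -> Dk n (fun x => h (x + b)).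
Proof.
move=> H; have -> : (fun x => h (x + b)) = fun x => h (1 * x + b).
  by apply/funext => x; rewrite mul1r.
exact: Dk_aff.
Qed.

End Step.

Arguments Sf {R}.
Arguments Sf_le0 {R}. Arguments Sf_ge1 {R}. Arguments Sf_01 {R}. Arguments Dk_Sf {R}. Arguments Sf_bound {R}.
Arguments derive1n_cst {R}. Arguments derive1n_cst_le {R}. Arguments derive1n_add {R}. Arguments derive1n_scale {R}.
Arguments derive1n_shift {R}. Arguments Dk_shift {R}. Arguments derive1n_loc {R}. Arguments derivable_loc {R}.
Arguments Dk_cst {R}. Arguments DkD {R}. Arguments DkZ {R}.

Section Main.
Variable R : realType.
Variable tau : R -> R.
Variables (X B : R).
Hypothesis B0 : 0 <= B.
Hypothesis HB : forall x h, X <= x -> 0 <= h <= 1 -> `|tau (x + h) - tau x| <= B.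

Definition KK : nat := (Num.truncn X).+1.

Lemma KK_gt : X < KK%:R.
Proof. exact: truncnS_gt. Qed.

Definition aa (n : nat) : R := if (KK <= n)%N then tau n.+1%:R - tau n%:R else 0.
Definition cc (n : nat) : R := \sum_(k < n) aa k.
Definition GG (x : R) : R :=
  cc (Num.truncn x) + aa (Num.truncn x) * Sf (x - (Num.truncn x)%:R).
Definition HH (m : nat) (x : R) : R :=
  cc m + aa m * Sf (x - m%:R) + aa m.+1 * Sf (x - m.+1%:R).

Lemma aa_bound n : `|aa n| <= B.
Proof.
rewrite /aa; case: ifP => Kn; last by rewrite normr0.
rewrite -natr1; apply: HB; last by rewrite ler01 lexx.
by apply: ltW; apply: (lt_le_trans KK_gt); rewrite ler_nat.
Qed.

Lemma aa0 : aa 0 = 0.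
Proof. by rewrite /aa. Qed.

Lemma GG_lt1 x : x < 1 -> GG x = 0.
Proof.
move=> x1; rewrite /GG; have /truncn0Pn -> : ~~ (1 <= x) by rewrite -ltNge.
by rewrite /cc big_ord0 aa0 mul0r addr0.
Qed.

Lemma GG_loc m x : m%:R < x < m.+2%:R -> GG x = HH m x.
Proof.
move=> /andP[mx xm]; rewrite /GG /HH.
have [x1|x1] := ltP x m.+1%:R.
  have -> : Num.truncn x = m by apply: truncn_def; rewrite (ltW mx) x1.
  rewrite (Sf_le0 (x - m.+1%:R)); last by rewrite subr_le0 ltW.
  by rewrite mulr0 addr0.
have -> : Num.truncn x = m.+1 by apply: truncn_def; rewrite x1 xm.
rewrite /cc big_ord_recr /= (Sf_ge1 (x - m%:R)) ?mulr1 ?addrA //.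
by rewrite lerBrDl natr1.
Qed.

Lemma Dk_HH n m : Dk n (HH m).
Proof.
have -> : HH m = fun x => cc m + aa m * Sf (x - m%:R) + aa m.+1 * Sf (x - m.+1%:R) by [].
apply: DkD; [apply: DkD; [exact: Dk_cst|]|]; apply: DkZ; apply: Dk_shift; exact: Dk_Sf.
Qed.


Lemma derive1n_HH k m : derive1n k.+1 (HH m) = fun x =>
  aa m * derive1n k.+1 Sf (x - m%:R) + aa m.+1 * derive1n k.+1 Sf (x - m.+1%:R).
Proof.
have -> : HH m = fun x => cc m + aa m * Sf (x - m%:R) + aa m.+1 * Sf (x - m.+1%:R) by [].
rewrite derive1n_add; last 2 first.
- apply: DkD; first exact: Dk_cst.
  by apply: DkZ; apply: Dk_shift; exact: Dk_Sf.
- by apply: DkZ; apply: Dk_shift; exact: Dk_Sf.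
rewrite derive1n_add; last 2 first.
- exact: Dk_cst.
- by apply: DkZ; apply: Dk_shift; exact: Dk_Sf.
rewrite derive1n_cst !derive1n_scale; last 2 first.
- by apply: Dk_shift; exact: Dk_Sf.
- by apply: Dk_shift; exact: Dk_Sf.
by rewrite !derive1n_shift; apply/funext => x; rewrite add0r.
Qed.

Lemma classify (x : R) : x < 1 \/ exists m : nat, m%:R < x < m.+2%:R.
Proof.
have [x1|x1] := ltP x 1; first by left.
right; have x0 : 0 <= x by apply: le_trans x1; exact: ler01.
have := truncn_itv x0; have : (0 < Num.truncn x)%N by rewrite truncn_gt0.
case: (Num.truncn x) => [//|m] _ /andP[h1 h2].
exists m; rewrite h2 andbT; apply: lt_le_trans h1; by rewrite ltr_nat.
Qed.

Lemma open_band (m : nat) : open [set y : R | m%:R < y /\ y < m.+2%:R].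
Proof. by apply: openI; [exact: open_gt|exact: open_lt]. Qed.

Lemma DG k (x : R) : derivable (derive1n k GG) x 1.
Proof.
case: (classify x) => [x1|[m hm]].
  apply: (@derivable_loc R k GG (fun _ : R => 0 : R) [set y | y < 1]) => //.
    by move=> y /= y1; exact: GG_lt1.
  exact: (Dk_cst k 0 k x (leqnn k)).
apply: (@derivable_loc R k GG (HH m) _ (open_band m)).
- by move=> y /= [h1 h2]; apply: GG_loc; rewrite h1 h2.
- by move: hm => /andP[].
- exact: (Dk_HH k m k x (leqnn k)).
Qed.

Lemma GG_cont : continuous GG.
Proof.
move=> x; apply: differentiable_continuous; apply/derivable1_diffP.
exact: (DG 0 x).
Qed.

Lemma dGG_cont k : continuous (derive1n k GG).
Proof.
move=> x; apply: differentiable_continuous; apply/derivable1_diffP.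
exact: (DG k x).
Qed.

Lemma dGG_bound k : exists M : R, forall x, `|derive1n k.+1 GG x| <= M.
Proof.
have [MS HMS] := @Sf_bound R k.+1.
have MS0 : 0 <= MS by apply: le_trans (HMS 0); exact: normr_ge0.
exists (B * MS + B * MS) => x.
case: (classify x) => [x1|[m hm]].
  rewrite (@derive1n_loc R k.+1 GG (fun _ : R => 0 : R) [set y | y < 1]) //.
  - by rewrite derive1n_cst normr0; apply: addr_ge0; exact: mulr_ge0.
  - by move=> y /= y1; exact: GG_lt1.
rewrite (@derive1n_loc R k.+1 GG (HH m) _ (open_band m)); last 2 first.
- by move=> y /= [h1 h2]; apply: GG_loc; rewrite h1 h2.
- by move: hm => /andP[].
rewrite derive1n_HH; apply: le_trans (ler_normD _ _) _.
by apply: lerD; rewrite normrM; apply: ler_pM => //; exact: aa_bound.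
Qed.

Lemma cc_K : cc KK = 0.
Proof.
by rewrite /cc; apply: big1 => i _; rewrite /aa leqNgt ltn_ord.
Qed.

Lemma cc_tele n : cc (KK + n) = tau (KK + n)%:R - tau KK%:R.
Proof.
elim: n => [|n IH]; first by rewrite addn0 cc_K subrr.
rewrite addnS /cc big_ord_recr /= -/(cc (KK + n)) IH /aa leq_addr.
ring.
Qed.


Lemma main_aux : exists g : R -> R,
    [/\ (forall (n : nat) (x : R), derivable (derive1n n g) x 1),
        (forall x : R, x <= 0 -> g x = 0),
        (forall n : nat, measurable_fun setT (derive1n n g : measurableTypeR R -> R) /\
           exists M : R, {ae @lebesgue_measure R, forall x, `|derive1n n g x| <= M}) &
        exists x0 C : R, forall x : R, x0 <= x ->
          `|tau x - Rintegral (@lebesgue_measure R) `[0, x] g| <= C].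
Proof.
exists (derive1 GG); split.
- by move=> n x; rewrite -derive1Sn; exact: DG.
- move=> x x0.
  rewrite -derive1n1 (@derive1n_loc R 1 GG (fun _ : R => 0 : R) [set y | y < 1]) //.
  + by rewrite derive1n_cst.
  + by move=> y /= y1; exact: GG_lt1.
  + by apply: le_lt_trans x0 _; exact: ltr01.
- move=> n; split.
    by rewrite -derive1Sn; apply: measurable_realfun.continuous_measurable_fun; exact: dGG_cont.
  have [M HM] := dGG_bound n; exists M; apply: aeW => x; rewrite -derive1Sn; exact: HM.
exists KK%:R, (B + `|tau KK%:R| + B) => x Kx.
have x0 : 0 < x by apply: lt_le_trans Kx; rewrite ltr0n.
have -> : Rintegral (@lebesgue_measure R) `[0, x] (derive1 GG) = GG x.
  rewrite /Rintegral (@continuous_FTC2 R (derive1 GG) GG 0 x x0).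
  - by rewrite (GG_lt1 0) ?ltr01 //= subr0.
  - by apply: continuous_subspaceT; exact: (dGG_cont 1).
  - split.
    + by move=> y _; exact: (DG 0 y).
    + by apply: cvg_at_right_filter; exact: GG_cont.
    + by apply: cvg_at_left_filter; exact: GG_cont.
  - by [].
have xge0 : 0 <= x := ltW x0.
have Kn : (KK <= Num.truncn x)%N by rewrite truncn_ge_nat.
have /andP[hx1 hx2] := truncn_itv xge0.
rewrite /GG.
move: Kn hx1 hx2; set n := Num.truncn x => Kn hx1 hx2.
have ccn : cc n = tau n%:R - tau KK%:R by rewrite -(subnKC Kn) cc_tele.
rewrite ccn.
have xe : tau x = tau (n%:R + (x - n%:R)) by rewrite addrC subrK.
rewrite xe.
have -> : tau (n%:R + (x - n%:R)) - (tau n%:R - tau KK%:R + aa n * Sf (x - n%:R)) =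
  (tau (n%:R + (x - n%:R)) - tau n%:R) + tau KK%:R - aa n * Sf (x - n%:R) by ring.
apply: le_trans (ler_normB _ _) _.
apply: lerD.
  apply: le_trans (ler_normD _ _) _; apply: lerD => //.
  apply: HB.
    by apply: ltW; apply: (lt_le_trans KK_gt); rewrite ler_nat.
  rewrite -natr1 in hx2; apply/andP; split; lra.
rewrite normrM; have /andP[s0 s1] := Sf_01 (x - n%:R).
apply: le_trans (ler_pM (normr_ge0 _) (normr_ge0 _) (aa_bound n) (_ : `|Sf (x - n%:R)| <= 1)) _.
  by rewrite ger0_norm.
by rewrite mulr1.
Qed.

End Main.

Theorem proposition3p5 (R : realType) (tau : R -> R) :
  lebesgue_measurable_fun tau -> boundedly_oscillating tau ->
  exists g : R -> R,
    [/\ (forall (n : nat) (x : R), derivable (derive1n n g) x 1),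
        (forall x : R, x <= 0 -> g x = 0),
        (forall n : nat, measurable_fun setT (derive1n n g : measurableTypeR R -> R) /\
           exists M : R, {ae @lebesgue_measure R, forall x, `|derive1n n g x| <= M}) &
        exists x0 C : R, forall x : R, x0 <= x ->
          `|tau x - Rintegral (@lebesgue_measure R) `[0, x] g| <= C].
Proof.
move=> _ /bo_bound1 [X [B [B0 HB]]].
exact: (@main_aux R tau X B B0 HB).
Qed.
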